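(* Assume $\mathbb{E}[V(yZ_T^0)]<\infty$ for every $y>0$. Then: (1) for every $y>0$, $v(y):=\mathbb{E}[V(yZ_T^0)]=\sup_{x>0}\{u(x,U)-xy\}$; (2) the function $x\mapsto u(x,U_c)$ coincides on $(0,\infty)$ with the concave envelope of the function $x\mapsto u(x,U)$.
   Context: Fix $T>0$ and a filtered probability space $(\Omega,\mathcal F,(\mathcal F_t)_{0\le t\le T},\mathbf P)$ satisfying the usual conditions. Fix $0<\lambda<1$ and a strictly positive càdlàg adapted stock price $S$. A $\lambda$-consistent price system is a strictly positive process $Z=(Z^0,Z^1)$ with $Z^0_0=1$, $Z^0$ a $\mathbf P$-martingale, $Z^1$ a $\mathbf P$-local martingale, and $Z^1_t/Z^0_t\in[(1-\lambda)S_t,S_t]$ a.s. for all $t$. Standing assumption: one such $Z$ is fixed. Following the paper, $\mathcal C(x)=\{f\in L^0_+(\mathbf P):\mathbb{E}[Z_T^0 f]\le x\}$ for $x>0$. A utility is a function $U:(0,\infty)\to\mathbb R$ that is non-constant, increasing, upper semicontinuous, with $U(\infty):=\lim_{x\to\infty}U(x)>0$ and $\lim_{x\to\infty}U(x)/x=0$; $U$ need not be concave. $U$ is extended by $-\infty$ on $(-\infty,0)$ and $U(0):=\lim_{x\downarrow0}U(x)$. For $f\ge0$, $\mathbb{E}[U(f)]:=-\infty$ if $U^-(f)\notin L^1$. For a utility-type function $W$ (here $W=U$ or $W=U_c$), $u(x,W):=\sup\{\mathbb{E}[W(f)]:f\in\mathcal C(x)\}$. The concave envelope $U_c$ of $U$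 is the smallest concave function $\mathbb R\to\mathbb R\cup\{-\infty\}$ with $U_c\ge U$; the concave envelope of a function $g$ on $(0,\infty)$ is likewise the smallest concave function dominating $g$. The convex conjugate of $U$ is $V(y):=\sup_{x>0}\{U(x)-xy\}$, $y>0$. *)

(* Defs.v *)
From HB Require Import structures.
From mathcomp Require Import all_boot all_order all_algebra.
From mathcomp Require Import all_classical all_reals all_analysis.
Set Implicit Arguments. Unset Strict Implicit. Unset Printing Implicit Defensive.
Import Order.TTheory GRing.Theory Num.Theory.
Import numFieldNormedType.Exports.
Local Open Scope classical_set_scope.
Local Open Scope ring_scope.

Section FinanceDefs.
Context {R : realType} {d : measure_display} {Omega : measurableType d}.
Variable P : probability Omega R.
Variable T : R.

Definition filtration (F : R -> set (set Omega)) : Prop :=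
  (forall t, @sigma_algebra Omega setT (F t) /\ F t `<=` measurable) /\
  (forall s t, 0 <= s -> s <= t -> t <= T -> F s `<=` F t).

Definition usual_conditions (F : R -> set (set Omega)) : Prop :=
  (forall t, 0 <= t -> t < T ->
     forall A, (forall s, t < s -> s <= T -> F s A) -> F t A) /\
  (forall N, (exists M, measurable M /\ P M = 0%E /\ N `<=` M) -> F 0 N).

(* processes are maps X : R -> Omega -> R, only relevant for t in [0,T] *)
Definition adapted (F : R -> set (set Omega)) (X : R -> Omega -> R) : Prop :=
  forall t, 0 <= t -> t <= T ->
    forall B : set R, measurable B -> F t (X t @^-1` B).

Definition cadlag (X : R -> Omega -> R) : Prop :=
  forall w,
    (forall t, 0 <= t -> t < T -> (fun s => X s w) @ at_right t --> X t w) /\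
    (forall t, 0 < t -> t <= T -> cvg ((fun s => X s w) @ at_left t)).

Definition martingale (F : R -> set (set Omega)) (X : R -> Omega -> R) : Prop :=
  adapted F X /\
  (forall t, 0 <= t -> t <= T -> P.-integrable setT (fun w => (X t w)%:E)) /\
  (forall s t, 0 <= s -> s <= t -> t <= T -> forall A, F s A ->
     (\int[P]_(w in A) (X t w)%:E = \int[P]_(w in A) (X s w)%:E)%E).

Definition stopping_time (F : R -> set (set Omega)) (tau : Omega -> R) : Prop :=
  (forall w, 0 <= tau w <= T) /\
  (forall t, 0 <= t -> t <= T -> F t [set w | tau w <= t]).

Definition local_martingale (F : R -> set (set Omega)) (X : R -> Omega -> R) : Prop :=
  adapted F X /\
  exists tau : nat -> Omega -> R,
    (forall n, stopping_time F (tau n)) /\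
    (forall n w, tau n w <= tau n.+1 w) /\
    {ae P, forall w, exists n, tau n w = T} /\
    (forall n, martingale F (fun t w => X (Order.min t (tau n w)) w)).

Definition consistent_price_system (F : R -> set (set Omega)) (lam : R)
  (S Z0 Z1 : R -> Omega -> R) : Prop :=
  (forall t w, 0 <= t -> t <= T -> 0 < Z0 t w /\ 0 < Z1 t w) /\
  (forall w, Z0 0 w = 1) /\
  martingale F Z0 /\ local_martingale F Z1 /\
  (forall t, 0 <= t -> t <= T ->
     {ae P, forall w, (1 - lam) * S t w <= Z1 t w / Z0 t w <= S t w}).

End FinanceDefs.

Section UtilityDefs.
Context {R : realType}.

(* U : (0,oo) -> R is a (possibly non-concave) utility *)
Definition is_utility (U : R -> R) : Prop :=
  (exists x y, 0 < x /\ 0 < y /\ U x != U y) /\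
  (forall x y, 0 < x -> x <= y -> U x <= U y) /\
  (forall x : R, 0 < x -> forall e : R, 0 < e ->
     \forall z \near x, U z < U x + e) /\
  (exists l : \bar R, ((fun x => (U x)%:E) @ +oo --> l) /\ (0 < l)%E) /\
  ((fun x => U x / x) @ +oo --> 0).

(* extension of U to R: -oo on (-oo,0), U(0) := lim_{x -> 0+} U x
   (= inf_{x>0} U x since U is increasing) *)
Definition Uext (U : R -> R) (x : R) : \bar R :=
  if x < 0 then -oo%E
  else if x == 0 then ereal_inf [set (U z)%:E | z in `]0, +oo[%classic]
  else (U x)%:E.

Definition concave_on (D : set R) (h : R -> \bar R) : Prop :=
  (forall x, D x -> h x != +oo%E) /\
  (forall x y t, D x -> D y -> 0 <= t -> t <= 1 ->
     (t%:E * h x + (1 - t)%R%:E * h y <= h (t * x + (1 - t) * y)%R)%E).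

(* smallest concave function on D dominating g on D (pointwise infimum of all
   concave dominating functions, which is itself concave and dominating) *)
Definition concave_envelope_on (D : set R) (g : R -> \bar R) (x : R) : \bar R :=
  ereal_inf [set h x | h in [set h : R -> \bar R |
                 concave_on D h /\ (forall z, D z -> (g z <= h z)%E)]].

Definition Uc (U : R -> R) : R -> \bar R := concave_envelope_on setT (Uext U).

Definition conj_V (U : R -> R) (y : R) : \bar R :=
  ereal_sup [set (U x - x * y)%:E | x in `]0, +oo[%classic].

End UtilityDefs.

Section ProblemDefs.
Context {R : realType} {d : measure_display} {Omega : measurableType d}.
Variable P : probability Omega R.

(* E[W(f)] := -oo if W^-(f) is not integrable *)
Definition expect_utility (W : R -> \bar R) (f : Omega -> R) : \bar R :=
  if (\int[P]_w maxe (- W (f w)) 0%E < +oo)%E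
  then (\int[P]_w W (f w))%E else -oo%E.

Definition budget_set (ZT : Omega -> R) (x : R) : set (Omega -> R) :=
  [set f : Omega -> R | measurable_fun setT f /\ (forall w, 0 <= f w) /\
           (\int[P]_w (ZT w * f w)%:E <= x%:E)%E].

Definition value_fun (ZT : Omega -> R) (W : R -> \bar R) (x : R) : \bar R :=
  ereal_sup [set expect_utility W f | f in budget_set ZT x].

End ProblemDefs.

(* Main.v *)
Require Import Defs.
From HB Require Import structures.
From mathcomp Require Import all_boot all_order all_algebra.
From mathcomp Require Import all_classical all_reals all_analysis.
From mathcomp Require Import measurable_realfun.
From mathcomp Require Import ring lra.
Set Implicit Arguments. Unset Strict Implicit. Unset Printing Implicit Defensive.
Import Order.TTheory GRing.Theory Num.Theory.
Import numFieldNormedType.Exports.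
Local Open Scope classical_set_scope.
Local Open Scope ring_scope.

Section IntLemmas.
Local Open Scope ereal_scope.
Context {R : realType} {d : measure_display} {Omega : measurableType d}.
Variable P : probability Omega R.

Lemma int_posneg (g : Omega -> \bar R) : measurable_fun setT g ->
  \int[P]_w g^\+ w < +oo -> \int[P]_w g^\- w < +oo -> P.-integrable setT g.
Proof.
move=> mg hp hn; apply/integrableP; split => //.
rewrite (_ : (fun w => `|g w|) = g^\+ \+ g^\-); last by rewrite -fune_abse.
rewrite ge0_integralD //; first exact: lte_add_pinfty.
- exact: measurable_funepos.
- exact: measurable_funeneg.
Qed.

Lemma int_upper (g h : Omega -> \bar R) : measurable_fun setT g ->
  P.-integrable setT h -> (forall w, g w <= h w) ->
  \int[P]_w g^\- w < +oo -> P.-integrable setT g.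
Proof.
move=> mg ih gh hn; apply: int_posneg => //.
apply: le_lt_trans (integral_funepos_lt_pinfty measurableT ih).
apply: ge0_le_integral => //.
- exact: measurable_funepos.
- exact: measurable_funepos (measurable_int _ ih).
- by move=> w _; apply: funepos_le => //; rewrite ?inE.
Qed.

Lemma int_sandwich (g h1 h2 : Omega -> \bar R) : measurable_fun setT g ->
  P.-integrable setT h1 -> P.-integrable setT h2 ->
  (forall w, h1 w <= g w) -> (forall w, g w <= h2 w) -> P.-integrable setT g.
Proof.
move=> mg i1 i2 h1g gh2; apply: (int_upper mg i2 gh2).
apply: le_lt_trans (integral_funeneg_lt_pinfty measurableT i1).
apply: ge0_le_integral => //.
- exact: measurable_funeneg.
- exact: measurable_funeneg (measurable_int _ i1).
- by move=> w _; apply: funeneg_le => //; rewrite ?inE.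
Qed.


Lemma int_lower (g h : Omega -> \bar R) : measurable_fun setT g ->
  P.-integrable setT h -> (forall w, h w <= g w) ->
  \int[P]_w g w < +oo -> P.-integrable setT g.
Proof.
move=> mg ih hg gl.
have hn : \int[P]_w g^\- w < +oo.
  apply: le_lt_trans (integral_funeneg_lt_pinfty measurableT ih).
  apply: ge0_le_integral => //.
  - exact: measurable_funeneg.
  - exact: measurable_funeneg (measurable_int _ ih).
  - by move=> w _; apply: funeneg_le => //; rewrite ?inE.
apply: int_posneg => //.
move: gl; rewrite integralE.
have : 0 <= \int[P]_w g^\- w by apply: integral_ge0 => w _; exact: funeneg_ge0.
move: hn; case: (\int[P]_w g^\- w) => [r _ _|//|//].
by rewrite lteBlDr.
Qed.

End IntLemmas.
Lemma itv_emeasurable (R : realType) (D : set R) (g : R -> \bar R) : measurable D ->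
  (forall r : R, is_interval [set x | (r%:E <= g x)%E]) -> measurable_fun D g.
Proof.
move=> mD hg.
apply: (measurability (@ErealGenCInfty.G R)) => [|/= _ [_] [r] -> <-].
  exact: ErealGenCInfty.measurableE.
apply: measurableI => //; apply: is_interval_measurable => s t/= gs gt u su.
have := hg r s t; rewrite /= !in_itv /= !andbT in gs gt *.
by move/(_ gs gt u su).
Qed.

Section Util.
Context {R : realType}.
Variable U : R -> R.
Hypothesis hU : is_utility U.

Let Umono x y : 0 < x -> x <= y -> U x <= U y.
Proof. by case: hU => _ [h _]; exact: h. Qed.

Lemma Vub x y : 0 < x -> ((U x - x * y)%:E <= conj_V U y)%E.
Proof.
move=> x0; apply: ereal_sup_ubound; exists x => //=.
by rewrite in_itv /= andbT.
Qed.

Lemma growth y : 0 < y -> exists M, 0 < M /\ forall x, M <= x -> U x <= y * x.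
Proof.
move=> y0; case: hU => _ [_ [_ [_ hc]]].
have := cvgr0_norm_lt _ hc y y0.
case=> M [Mr HM].
have hM : M <= `|M| := real_ler_norm Mr.
have hM0 : 0 <= `|M| := normr_ge0 M.
exists (`|M| + 1); split; first by lra.
move=> x Mx.
have xM : M < x by lra.
have x0 : 0 < x by lra.
have := HM _ xM => /ltW h.
have := ler_norm (U x / x); move=> /le_trans /(_ h).
by rewrite ler_pdivrMr // mulrC.
Qed.

Lemma Vfin y : 0 < y -> (conj_V U y < +oo)%E.
Proof.
move=> y0; have [M [M0 HM]] := growth y0.
apply: (@le_lt_trans _ _ (`|U M|)%:E); last by rewrite ltry.
apply: ge_ereal_sup => _ [x /= + <-]; rewrite in_itv /= andbT => x0.
rewrite lee_fin; have [xM|Mx] := leP M x.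
  have := HM _ xM; have := normr_ge0 (U M); have : 0 <= x * y by rewrite mulr_ge0 // ltW.
  by rewrite mulrC => *; lra.
have := Umono x0 (ltW Mx); have := ler_norm (U M).
have : 0 <= x * y by rewrite mulr_ge0 // ltW.
by move=> *; lra.
Qed.

Lemma Vlb y : ((U 1 - y)%:E <= conj_V U y)%E.
Proof. by have := @Vub 1 y ltr01; rewrite mul1r. Qed.

Lemma Vfin_num y : 0 < y -> conj_V U y \is a fin_num.
Proof.
move=> y0; rewrite fin_numElt (Vfin y0) andbT.
by apply: lt_le_trans (Vlb y); rewrite ltNyr.
Qed.

Definition Vr y := fine (conj_V U y).

Lemma VE y : 0 < y -> conj_V U y = (Vr y)%:E.
Proof. by move=> y0; rewrite /Vr fineK // Vfin_num. Qed.

Lemma VubR x y : 0 < x -> 0 < y -> U x - x * y <= Vr y.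
Proof. by move=> x0 y0; rewrite -lee_fin -VE //; exact: Vub. Qed.

Lemma VlbR y : 0 < y -> U 1 - y <= Vr y.
Proof. by move=> y0; rewrite -lee_fin -VE //; exact: Vlb. Qed.

Lemma Vmono y y' : y <= y' -> (conj_V U y' <= conj_V U y)%E.
Proof.
move=> yy'; apply: ge_ereal_sup => _ [x /= + <-]; rewrite in_itv /= andbT => x0.
apply: le_trans (Vub _ x0); rewrite lee_fin lerD2l lerN2.
by rewrite ler_pM2l.
Qed.

Lemma Uext_pos x : 0 < x -> Uext U x = (U x)%:E.
Proof. by move=> x0; rewrite /Uext ltNge (ltW x0) /= gt_eqF. Qed.

Lemma Uext_neg x : x < 0 -> Uext U x = -oo%E.
Proof. by move=> x0; rewrite /Uext x0. Qed.

Lemma Uext0_le z : 0 < z -> (Uext U 0 <= (U z)%:E)%E.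
Proof.
move=> z0; rewrite /Uext ltxx eqxx; apply: ereal_inf_lbound.
by exists z => //=; rewrite in_itv /= andbT.
Qed.

Lemma Uext_le_V z c : 0 <= z -> 0 < c -> (Uext U z <= (Vr c + z * c)%:E)%E.
Proof.
move=> z0 c0; have [zp|] := ltP 0 z.
  by rewrite Uext_pos // lee_fin; have := VubR zp c0; lra.
move=> zn; have -> : z = 0 by apply/eqP; rewrite eq_le zn z0.
rewrite mul0r addr0; apply/lee_addgt0Pr => e e0.
apply: le_trans (Uext0_le (divr_gt0 e0 c0)) _.
rewrite lee_fin; have := VubR (divr_gt0 e0 c0) c0.
by rewrite divfK ?gt_eqF //; lra.
Qed.

Lemma Uext_mono : {homo Uext U : x y / x <= y >-> (x <= y)%E}.
Proof.
move=> x y xy; have [xn|] := ltP x 0; first by rewrite Uext_neg // leNye.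
rewrite le_eqVlt => /orP[/eqP x0|xp].
  subst x; rewrite le_eqVlt in xy; case/orP: xy => [/eqP <- //|yp].
  by rewrite (Uext_pos yp); exact: Uext0_le.
by rewrite !Uext_pos ?lee_fin ?(lt_le_trans xp) //; apply: Umono.
Qed.

Definition hc (c : R) : R -> \bar R :=
  fun z => if z < 0 then -oo%E else (Vr c + z * c)%:E.

Lemma tNy (t : R) (b : \bar R) : 0 < t -> (t%:E * -oo + b = -oo)%E.
Proof. by move=> t0; rewrite muleC gt0_mulNye ?lte_fin // addNye. Qed.

Lemma tNy' (t : R) (a : \bar R) : 0 < t -> (a + t%:E * -oo = -oo)%E.
Proof. by move=> t0; rewrite muleC gt0_mulNye ?lte_fin // addeNy. Qed.

Lemma hc_concave c : concave_on setT (hc c).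
Proof.
split; first by move=> x _; rewrite /hc; case: ifP.
move=> x y t _ _ t0 t1.
have [->|tp] := eqVneq t 0.
  by rewrite mul0e add0e subr0 mul1e mul0r add0r mul1r.
have [->|t1'] := eqVneq t 1.
  by rewrite subrr mul0e adde0 mul1e mul1r mul0r addr0.
have tp' : 0 < t by rewrite lt_neqAle eq_sym tp t0.
have tq : 0 < 1 - t by rewrite subr_gt0 lt_neqAle t1' t1.
rewrite /hc; case: ifPn => xn; first by rewrite tNy // leNye.
case: ifPn => yn; first by rewrite tNy' // leNye.
rewrite -!leNgt in xn yn.
have -> : (t * x + (1 - t) * y < 0) = false.
  by apply/negbTE; rewrite -leNgt addr_ge0 // mulr_ge0 // ltW.
rewrite -!EFinM -EFinD lee_fin.
have -> : t * (Vr c + x * c) + (1 - t) * (Vr c + y * c) = Vr c + (t * x + (1 - t) * y) * c by ring.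
by [].
Qed.

Lemma hc_dom c : 0 < c -> forall z, (Uext U z <= hc c z)%E.
Proof.
move=> c0 z; rewrite /hc; case: ifPn => zn.
  by rewrite Uext_neg.
by apply: Uext_le_V => //; rewrite leNgt.
Qed.

Lemma Uc_le c z : 0 < c -> 0 <= z -> (Uc U z <= (Vr c + z * c)%:E)%E.
Proof.
move=> c0 z0; apply: ereal_inf_lbound; exists (hc c).
  by split; [exact: hc_concave|move=> x _; exact: hc_dom].
by rewrite /hc ltNge z0.
Qed.

Lemma Uc_ge z : (Uext U z <= Uc U z)%E.
Proof. by apply: le_ereal_inf_tmp => _ [h [_ hd] <-]; apply: hd. Qed.

Lemma Uc_nepinfty z : Uc U z != +oo%E.
Proof.
rewrite -ltey; apply: (@le_lt_trans _ _ (hc 1 z)); last first.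
  by rewrite /hc; case: ifP => // _; rewrite ltry.
apply: ereal_inf_lbound; exists (hc 1) => //.
by split; [exact: hc_concave|move=> x _; exact: hc_dom].
Qed.

Lemma Uc_concave : concave_on setT (Uc U).
Proof.
split; first by move=> x _; exact: Uc_nepinfty.
move=> x y t _ _ t0 t1; apply: le_ereal_inf_tmp => _ [h hfam <-]; case: (hfam) => [[_ hconc] hd].
apply: le_trans (hconc x y t I I t0 t1).
have hh : forall z, (Uc U z <= h z)%E.
  by move=> z; apply: ereal_inf_lbound; exists h.
by apply: leeD; apply: lee_wpmul2l; rewrite ?lee_fin ?subr_ge0.
Qed.

Lemma Uext_meas : measurable_fun setT (Uext U).
Proof.
apply: itv_emeasurable => // r a b /= ha hb z /andP[az zb].
by apply: le_trans ha _; apply: Uext_mono.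
Qed.

Lemma V_meas : measurable_fun setT (conj_V U).
Proof.
apply: itv_emeasurable => // r a b /= ha hb z /andP[az zb].
by apply: le_trans hb _; apply: Vmono.
Qed.

Lemma Uc_meas : measurable_fun setT (Uc U).
Proof.
apply: itv_emeasurable => // r a b /= ha hb z /andP[az zb].
have [ab|] := eqVneq a b.
  subst b; have -> : z = a by apply/eqP; rewrite eq_le zb az.
  done.
move=> ab; have ab' : a < b by rewrite lt_neqAle ab (le_trans az zb).
pose t := (b - z) / (b - a).
have bapos : 0 < b - a by rewrite subr_gt0.
have t0 : 0 <= t by apply: divr_ge0; lra.
have t1 : t <= 1 by rewrite ler_pdivrMr // mul1r; lra.
have ze : t * a + (1 - t) * b = z.
  rewrite /t; field; by rewrite gt_eqF.
case: Uc_concave => _ /(_ a b t I I t0 t1); rewrite ze => h.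
apply: le_trans h.
have -> : r%:E = (t%:E * r%:E + (1 - t)%:E * r%:E)%E.
  by rewrite -!EFinM -EFinD; congr (_%:E); ring.
by apply: leeD; apply: lee_wpmul2l; rewrite ?lee_fin ?subr_ge0.
Qed.
End Util.

Section Prob.
Context {R : realType} {d : measure_display} {Omega : measurableType d}.
Variable P : probability Omega R.
Variable U : R -> R.
Hypothesis hU : is_utility U.
Variable Z : Omega -> R.
Hypothesis mZ : measurable_fun setT Z.
Hypothesis Zpos : forall w, 0 < Z w.
Hypothesis iZ : P.-integrable setT (EFin \o Z).
Hypothesis hV : forall y, 0 < y -> (\int[P]_w conj_V U (y * Z w) < +oo)%E.

Lemma int_aff a b : P.-integrable setT (fun w => (a + b * Z w)%:E).
Proof.
have h : P.-integrable setT (fun w => ((EFin \o cst a) w + b%:E * (EFin \o Z) w)%E).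
  apply: integrableD => //; first exact: finite_measure_integrable_cst.
  exact: integrableZl.
apply: eq_integrable h => // w _; by rewrite /= EFinD EFinM.
Qed.

Lemma VZ_meas y : measurable_fun setT (fun w => conj_V U (y * Z w)).
Proof.
apply: (measurableT_comp (V_meas U) (g := fun w => y * Z w)).
exact: measurable_funM.
Qed.

Lemma VZ_int y : 0 < y -> P.-integrable setT (fun w => conj_V U (y * Z w)).
Proof.
move=> y0; apply: (int_lower (VZ_meas y) (int_aff (U 1) (- y))) => //.
  by move=> w; rewrite mulNr; exact: Vlb.
exact: hV.
Qed.

Lemma Zf_int f x : budget_set P Z x f ->
  P.-integrable setT (fun w => (Z w * f w)%:E).
Proof.
case=> mf [f0 fx]; apply/integrableP; split.
  by apply/measurable_EFinP; exact: measurable_funM.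
apply: (@le_lt_trans _ _ x%:E); last by rewrite ltry.
apply: le_trans fx; apply: ge0_le_integral => //.
- by apply/measurableT_comp => //; apply/measurable_EFinP; exact: measurable_funM.
- by apply/measurable_EFinP; exact: measurable_funM.
- by move=> w _; rewrite gee0_abs // lee_fin mulr_ge0 // ltW.
Qed.


Section W.
Variable W : R -> \bar R.
Hypothesis Wm : measurable_fun setT W.
Hypothesis Wub : forall z c, 0 <= z -> 0 < c -> (W z <= (Vr U c + z * c)%:E)%E.

Lemma W_ub f y w : 0 <= f w -> 0 < y ->
  (W (f w) <= conj_V U (y * Z w) + (y%:E * (Z w * f w)%:E))%E.
Proof.
move=> f0 y0; have yz : 0 < y * Z w by rewrite mulr_gt0.
rewrite (VE hU yz) -EFinM -EFinD; apply: le_trans (Wub f0 yz) _.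
have e : f w * (y * Z w) = y * (Z w * f w) by ring.
by rewrite e.
Qed.

Lemma Wf_meas (f : Omega -> R) : measurable_fun setT f -> measurable_fun setT (fun w => W (f w)).
Proof. by move=> mf; exact: (measurableT_comp Wm mf). Qed.

Lemma ub_int f x y : budget_set P Z x f -> 0 < y ->
  P.-integrable setT (fun w => conj_V U (y * Z w) + (y%:E * (Z w * f w)%:E))%E.
Proof.
move=> hf y0; apply: integrableD => //; first exact: VZ_int.
by apply: integrableZl => //; exact: Zf_int hf.
Qed.

Lemma negE (g : Omega -> \bar R) :
  (fun w => maxe (- g w) 0)%E = g^\-%E.
Proof. by apply/funext => w; rewrite funenegE. Qed.

Lemma EU_int f x : budget_set P Z x f ->
  (\int[P]_w maxe (- W (f w)) 0 < +oo)%E ->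
  P.-integrable setT (fun w => W (f w)).
Proof.
move=> hf; rewrite (negE (fun w => W (f w))) => hn.
case: (hf) => mf [f0 _].
apply: (int_upper (Wf_meas mf) (ub_int hf ltr01)) => // w.
exact: W_ub.
Qed.

Lemma EU_ub f x y : budget_set P Z x f -> 0 < y ->
  (expect_utility P W f <= \int[P]_w conj_V U (y * Z w) + (x * y)%:E)%E.
Proof.
move=> hf y0; rewrite /expect_utility; case: ifPn => hn; last by rewrite leNye.
have iW := EU_int hf hn.
case: (hf) => mf [f0 fx].
apply: le_trans (le_integral measurableT iW (ub_int hf y0) _) _.
  by move=> w _; exact: W_ub.
rewrite integralD //; last by apply: integrableZl => //; exact: Zf_int hf.
  2: exact: VZ_int.
rewrite integralZl //; last exact: Zf_int hf.
apply: leeD => //; rewrite mulrC EFinM.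
by apply: lee_wpmul2l => //; rewrite lee_fin ltW.
Qed.

Lemma EU_ge f x (g : Omega -> \bar R) : budget_set P Z x f ->
  P.-integrable setT g -> (forall w, (g w <= W (f w))%E) ->
  (\int[P]_w g w <= expect_utility P W f)%E.
Proof.
move=> hf ig gW; case: (hf) => mf [f0 _].
have hn : (\int[P]_w maxe (- W (f w)) 0 < +oo)%E.
  rewrite (negE (fun w => W (f w))).
  apply: le_lt_trans (integral_funeneg_lt_pinfty measurableT ig).
  apply: ge0_le_integral => //.
  - exact: measurable_funeneg (Wf_meas mf).
  - exact: measurable_funeneg (measurable_int _ ig).
  - by move=> w _; apply: funeneg_le => //; rewrite ?inE.
rewrite /expect_utility hn.
apply: le_integral => //; first exact: EU_int hf hn.
Qed.

End W.
End Prob.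

Section Cand.
Context {R : realType}.

Definition cand (n : nat) : R :=
  if (unpickle n : option rat) is Some q then (if 0 < q then ratr q else 1) else 1.

Lemma cand_pos n : 0 < cand n.
Proof.
rewrite /cand; case: (unpickle n : option rat) => [q|//].
by case: ifPn => // q0; rewrite ltr0q.
Qed.

Lemma cand_dense (x e : R) : 0 < x -> 0 < e -> exists n, x < cand n < x + e.
Proof.
move=> x0 e0; have : x < x + e by rewrite ltrDl.
case/rat_in_itvoo => q; rewrite in_itv /= => /andP[xq qxe].
have q0 : 0 < q by rewrite -(ltr0q R); exact: lt_trans xq.
exists (pickle q); rewrite /cand pickleK q0.
by rewrite xq qxe.
Qed.

Variable U : R -> R.
Hypothesis hU : is_utility U.

Lemma Vr_approx c e : 0 < c -> 0 < e ->
  exists n, Vr U c - e < U (cand n) - cand n * c.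
Proof.
move=> c0 e0.
have h2 : 0 < e / 2 by rewrite divr_gt0.
have : ((Vr U c - e / 2)%:E < conj_V U c)%E by rewrite (VE hU c0) lte_fin; lra.
case/ereal_sup_gt => _ [x /= + <-]; rewrite in_itv /= andbT lte_fin => x0 hx.
have [n /andP[xn nx]] := cand_dense x0 (divr_gt0 (divr_gt0 e0 (ltr0Sn _ 1)) c0).
exists n.
have Um : U x <= U (cand n) by case: hU => _ [h _]; apply: h => //; exact: ltW.
have : cand n * c < (x + e / 2 / c) * c by rewrite ltr_pM2r.
rewrite mulrDl divfK ?gt_eqF //.
have : x * c < cand n * c by rewrite ltr_pM2r.
move=> *; lra.
Qed.
End Cand.

Section Sel.
Context {R : realType} {d : measure_display} {Omega : measurableType d}.
Variable P : probability Omega R.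
Variable U : R -> R.
Hypothesis hU : is_utility U.
Variable Z : Omega -> R.
Hypothesis mZ : measurable_fun setT Z.
Hypothesis Zpos : forall w, 0 < Z w.
Hypothesis iZ : P.-integrable setT (EFin \o Z).
Hypothesis hV : forall y, 0 < y -> (\int[P]_w conj_V U (y * Z w) < +oo)%E.

Lemma comp_nat_meas (N : Omega -> nat) d' (T' : measurableType d') (phi : nat -> T') :
  (forall n, measurable [set w | N w = n]) -> measurable_fun setT (fun w => phi (N w)).
Proof.
move=> hN _ A mA; rewrite setTI.
have -> : (fun w => phi (N w)) @^-1` A =
    \bigcup_n ([set w | N w = n] `&` [set _ | A (phi n)]).
  apply/seteqP; split => w /=; first by move=> h; exists (N w).
  by case=> n _ [<-].
apply: bigcupT_measurable => n; apply: measurableI => //.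
case: (pselect (A (phi n))) => h.
  by rewrite (_ : [set _ | A (phi n)] = setT) //; apply/seteqP; split.
by rewrite (_ : [set _ | A (phi n)] = set0) //; apply/seteqP; split.
Qed.

Variables (y e : R).
Hypotheses (y0 : 0 < y) (e0 : 0 < e).

Definition Bb n w : bool := Vr U (y * Z w) - e < U (cand n) - cand n * (y * Z w).

Lemma Bb_meas n : measurable [set w | Bb n w].
Proof.
have m1 : measurable_fun setT (fun w => Vr U (y * Z w) - e).
  apply: measurable_funB => //.
  exact: (measurableT_comp (fine_measurable measurableT) (VZ_meas U mZ y)).
have m2 : measurable_fun setT (fun w => U (cand n) - cand n * (y * Z w)).
  apply: measurable_funB => //; apply: measurable_funM => //.
  exact: measurable_funM.
have mt : measurable [set true] by [].
have := measurable_fun_ltr m1 m2 measurableT mt.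
by rewrite setTI.
Qed.

Lemma exB w : exists n, Bb n w.
Proof. by apply: Vr_approx => //; rewrite mulr_gt0. Qed.

Definition Nsel w := ex_minn (exB w).

Lemma Nsel_meas n : measurable [set w | Nsel w = n].
Proof.
have -> : [set w | Nsel w = n] =
    [set w | Bb n w] `&` \bigcap_k (if (k < n)%N then ~` [set w | Bb k w] else setT).
  apply/seteqP; split => w /=.
    rewrite /Nsel; case: ex_minnP => m hm hmin <-; split => // k _.
    case: ifPn => // km /= hk; have := hmin k hk; rewrite leqNgt km //.
  move=> [hn hk]; rewrite /Nsel; case: ex_minnP => m hm hmin.
  apply/eqP; rewrite eqn_leq hmin //= leqNgt; apply/negP => mn.
  by have := hk m I; rewrite mn /=; apply.
apply: measurableI; first exact: Bb_meas.
apply: bigcapT_measurable => k; case: ifPn => // _.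
exact/measurableC/Bb_meas.
Qed.

Definition fsel w : R := cand (Nsel w).

Lemma fsel_meas : measurable_fun setT fsel.
Proof. exact: (comp_nat_meas (fun n => cand n : R) Nsel_meas). Qed.

Lemma fsel_pos w : 0 < fsel w.
Proof. exact: cand_pos. Qed.

Lemma fsel_spec w : Vr U (y * Z w) - e < U (fsel w) - fsel w * (y * Z w).
Proof. by rewrite /fsel /Nsel; case: ex_minnP. Qed.

Lemma Ufsel_meas : measurable_fun setT (fun w => (U (fsel w))%:E).
Proof. exact: (comp_nat_meas (fun n => (U (cand n))%:E) Nsel_meas). Qed.

End Sel.

Section Dual.
Context {R : realType} {d : measure_display} {Omega : measurableType d}.
Variable P : probability Omega R.
Variable U : R -> R.
Hypothesis hU : is_utility U.
Variable Z : Omega -> R.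
Hypothesis mZ : measurable_fun setT Z.
Hypothesis Zpos : forall w, 0 < Z w.
Hypothesis iZ : P.-integrable setT (EFin \o Z).
Hypothesis hV : forall y, 0 < y -> (\int[P]_w conj_V U (y * Z w) < +oo)%E.

Let VZi y (y0 : 0 < y) := @VZ_int R d Omega P U Z mZ iZ hV y y0.
Let EUub := EU_ub hU mZ Zpos iZ hV.
Let EUge := EU_ge hU mZ Zpos iZ hV.
Let Zfi := @Zf_int R d Omega P Z mZ Zpos.

Lemma VrZ_int y : 0 < y -> P.-integrable setT (fun w => (Vr U (y * Z w))%:E).
Proof.
move=> y0; apply: eq_integrable (VZi y0) => // w _.
by rewrite (VE hU) // mulr_gt0.
Qed.

Lemma EFin_int_comb (a b : Omega -> R) (k l m : R) :
  P.-integrable setT (fun w => (a w)%:E) -> P.-integrable setT (fun w => (b w)%:E) ->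
  P.-integrable setT (fun w => (k * a w + l * b w + m)%:E).
Proof.
move=> ia ib.
have h : P.-integrable setT (fun w => (k%:E * (a w)%:E + l%:E * (b w)%:E)
                                        + (EFin \o cst m) w)%E.
  apply: integrableD => //; last exact: finite_measure_integrable_cst.
  by apply: integrableD => //; apply: integrableZl.
by apply: eq_integrable h => // w _; rewrite /= -!EFinM -!EFinD.
Qed.

Lemma part1_ge y : 0 < y ->
  (ereal_sup [set (value_fun P Z (Uext U) x - (x * y)%:E)%E
             | x in `]0%R, +oo[%classic] <= \int[P]_w conj_V U (y * Z w))%E.
Proof.
move=> y0; apply: ge_ereal_sup => _ [x _ <-].
rewrite leeBlDr //; apply: ge_ereal_sup => _ [f hf <-].
exact: (EUub (Uext_meas hU) (Uext_le_V hU) hf y0).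
Qed.


Lemma part1_le y : 0 < y ->
  (\int[P]_w conj_V U (y * Z w) <= ereal_sup [set (value_fun P Z (Uext U) x - (x * y)%:E)%E
             | x in `]0%R, +oo[%classic])%E.
Proof.
move=> y0.
have vfin := integrable_fin_num measurableT (VZi y0).
rewrite -(fineK vfin); set fv := fine _.
apply/lee_addgt0Pr => e e0.
have ee : 0 < e / 2 by rewrite divr_gt0.
pose f := fsel hU Zpos y0 ee.
have fpos : forall w, 0 < f w by move=> w; exact: cand_pos.
have fsp : forall w, Vr U (y * Z w) - e / 2 < U (f w) - f w * (y * Z w).
  by move=> w; exact: fsel_spec.
have mf : measurable_fun setT f by exact: fsel_meas.
have y20 : 0 < y / 2 by rewrite divr_gt0.
pose bnd w := (2 / y) * Vr U (y / 2 * Z w) + (- (2 / y)) * Vr U (y * Z w) + (2 / y) * (e / 2).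
have ibnd : P.-integrable setT (fun w => (bnd w)%:E).
  exact: (EFin_int_comb _ _ _ (VrZ_int y20) (VrZ_int y0)).
have Zfb : forall w, 0 <= Z w * f w <= bnd w.
  move=> w; apply/andP; split; first by rewrite mulr_ge0 // ltW.
  have h1 := VubR hU (fpos w) (mulr_gt0 y20 (Zpos w)).
  have h2 := fsp w.
  set a := Z w * f w.
  have e1 : f w * (y / 2 * Z w) = y / 2 * a by rewrite /a; ring.
  have e2 : f w * (y * Z w) = 2 * (y / 2 * a) by rewrite /a; field.
  rewrite e1 in h1; rewrite e2 in h2.
  have hb : y / 2 * a <= Vr U (y / 2 * Z w) - Vr U (y * Z w) + e / 2 by lra.
  have -> : a = 2 / y * (y / 2 * a) by field; rewrite gt_eqF.
  have -> : bnd w = 2 / y * (Vr U (y / 2 * Z w) - Vr U (y * Z w) + e / 2).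
    by rewrite /bnd; ring.
  by rewrite ler_pM2l // divr_gt0.
have mZf : measurable_fun setT (fun w => (Z w * f w)%:E).
  by apply/measurable_EFinP; exact: measurable_funM.
have iZf : P.-integrable setT (fun w => (Z w * f w)%:E).
  apply: le_integrable ibnd => // w _.
  case/andP: (Zfb w) => h0 h1.
  rewrite !gee0_abs ?lee_fin //; exact: le_trans h1.
have Ifin := integrable_fin_num measurableT iZf.
set x0 := fine (\int[P]_w (Z w * f w)%:E).
have x0ge : 0 <= x0.
  rewrite /x0 -lee_fin fineK //; apply: integral_ge0 => w _.
  by rewrite lee_fin mulr_ge0 // ltW.
pose xx := x0 + e / 2 / y.
have ey : 0 < e / 2 / y by rewrite divr_gt0.
have xx0 : 0 < xx by rewrite /xx; lra.
have hf : budget_set P Z xx f.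
  split => //; split; first by move=> w; exact: ltW.
  rewrite -(fineK Ifin) -/x0 lee_fin /xx.
  lra.
pose g (w : Omega) := (conj_V U (y * Z w) + ((EFin \o cst (- (e / 2))%R) w + y%:E * (Z w * f w)%:E))%E.
have ig : P.-integrable setT g.
  apply: integrableD => //; first exact: VZi.
  apply: integrableD => //; first exact: finite_measure_integrable_cst.
  exact: integrableZl.
have gle : forall w, (g w <= Uext U (f w))%E.
  move=> w; rewrite /g Uext_pos // (VE hU (mulr_gt0 y0 (Zpos w))) /=.
  rewrite -EFinM -!EFinD lee_fin.
  have := fsp w; have -> : f w * (y * Z w) = y * (Z w * f w) by ring.
  lra.
have hEU := EUge (Uext_meas hU) (Uext_le_V hU) hf ig gle.
have intg : (\int[P]_w g w = (fv - e / 2 + y * x0)%:E)%E.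
  rewrite /g integralD //; [|exact: VZi|].
    rewrite integralD //; [|exact: finite_measure_integrable_cst|exact: integrableZl].
    have -> : (\int[P]_x (EFin \o cst (- (e / 2))%R) x = (- (e / 2))%:E)%E.
      rewrite -[LHS]/(\int[P]_x cst ((- (e / 2))%:E) x)%E.
      rewrite integral_cst //; transitivity ((- (e / 2))%:E * 1)%E; last by rewrite mule1.
      by congr (_ * _)%E; exact: probability_setT.
    rewrite integralZl //.
    rewrite -(fineK Ifin) -/x0 -(fineK vfin) -/fv.
    by rewrite -EFinM -!EFinD addrA.
  apply: integrableD => //; first exact: finite_measure_integrable_cst.
  exact: integrableZl.
have hval : ((fv - e / 2 + y * x0)%:E <= value_fun P Z (Uext U) xx)%E.
  rewrite -intg; apply: le_trans hEU _.
  by apply: ereal_sup_ubound; exists f.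
apply: (@le_trans _ _ (value_fun P Z (Uext U) xx - (xx * y)%:E + e%:E)%E); last first.
  apply: leeD => //; apply: ereal_sup_ubound; exists xx => //=.
  by rewrite in_itv /= andbT.
rewrite -EFinN.
have -> : fv = (fv - e / 2 + y * x0) + (- (xx * y)) + e.
  by rewrite /xx; field; rewrite gt_eqF.
by rewrite !EFinD; apply: leeD => //; apply: leeD.
Qed.

Lemma part1 y : 0 < y ->
  (\int[P]_w conj_V U (y * Z w) = ereal_sup [set (value_fun P Z (Uext U) x - (x * y)%:E)%E
             | x in `]0%R, +oo[%classic])%E.
Proof.
by move=> y0; apply/eqP; rewrite eq_le part1_le // part1_ge.
Qed.

End Dual.

Section Part2.
Context {R : realType} {d : measure_display} {Omega : measurableType d}.
Variable P : probability Omega R.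
Variable U : R -> R.
Hypothesis hU : is_utility U.
Variable Z : Omega -> R.
Hypothesis mZ : measurable_fun setT Z.
Hypothesis Zpos : forall w, 0 < Z w.
Hypothesis iZ : P.-integrable setT (EFin \o Z).
Hypothesis hV : forall y, 0 < y -> (\int[P]_w conj_V U (y * Z w) < +oo)%E.

Let VZi y (y0 : 0 < y) := @VZ_int R d Omega P U Z mZ iZ hV y y0.
Let EUub := EU_ub hU mZ Zpos iZ hV.
Let EUge := EU_ge hU mZ Zpos iZ hV.
Let EUint := EU_int hU mZ Zpos iZ hV.
Let Zfi := @Zf_int R d Omega P Z mZ Zpos.

Let UcW : forall z c, 0 <= z -> 0 < c -> (Uc U z <= (Vr U c + z * c)%:E)%E :=
  fun z c z0 c0 => Uc_le hU c0 z0.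

Local Notation wU := (value_fun P Z (Uext U)).
Local Notation wc := (value_fun P Z (Uc U)).

Lemma wU_lb x : 0 < x -> exists r : R, (r%:E <= wU x)%E.
Proof.
move=> x0.
have IZfin := integrable_fin_num measurableT iZ.
set IZ := fine (\int[P]_w (EFin \o Z) w).
have IZ0 : 0 <= IZ.
  rewrite /IZ -lee_fin fineK //; apply: integral_ge0 => w _.
  by rewrite lee_fin ltW.
pose c := x / (IZ + 1).
have c0 : 0 < c by rewrite divr_gt0 // ltr_wpDl.
have hf : budget_set P Z x (fun _ => c).
  split => //; split; first by move=> _; exact: ltW.
  under eq_integral do rewrite EFinM.
  rewrite integralZr //; rewrite -[X in (X * _)%E]/(\int[P]_w (EFin \o Z) w)%E.
  rewrite -(fineK IZfin) -/IZ -EFinM lee_fin /c.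
  rewrite mulrCA ger_pMr // ler_pdivrMr ?ltr_wpDl //; lra.
exists (U c).
have ig : P.-integrable setT (EFin \o cst (U c)) by exact: finite_measure_integrable_cst.
have gle : forall w : Omega, ((EFin \o cst (U c)) w <= Uext U c)%E by move=> w; rewrite Uext_pos.
have := EUge (Uext_meas hU) (Uext_le_V hU) hf ig gle.
have -> : (\int[P]_w (EFin \o cst (U c)) w = (U c)%:E)%E.
  rewrite -[LHS]/(\int[P]_w cst ((U c)%:E) w)%E.
  rewrite integral_cst //; transitivity ((U c)%:E * 1)%E; last by rewrite mule1.
  by congr (_ * _)%E; exact: probability_setT.
move=> h; apply: le_trans h _; apply: ereal_sup_ubound; by exists (fun _ => c).
Qed.

Lemma wU_mono a b : a <= b -> (wU a <= wU b)%E.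
Proof.
move=> ab; apply: ereal_sup_le => _ [f [mf [f0 fa]] <-]; exists f => //.
by split => //; split => //; apply: le_trans fa _; rewrite lee_fin.
Qed.

Lemma wc_ub x y : 0 < y -> (wc x <= \int[P]_w conj_V U (y * Z w) + (x * y)%:E)%E.
Proof.
move=> y0; apply: ge_ereal_sup => _ [f hf <-].
exact: (EUub (Uc_meas hU) UcW hf y0).
Qed.

Lemma wU_le_wc x : (wU x <= wc x)%E.
Proof.
apply: ge_ereal_sup => _ [f hf <-].
rewrite {1}/expect_utility; case: ifPn => hn; last by rewrite leNye.
have iW := EUint (Uext_meas hU) (Uext_le_V hU) hf hn.
apply: le_trans (EUge (Uc_meas hU) UcW hf iW _) _.
  by move=> w; exact: Uc_ge.
by apply: ereal_sup_ubound; exists f.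
Qed.


Lemma sup2 (A B : set (\bar R)) (t : R) (M : \bar R) :
  ereal_sup A \is a fin_num -> ereal_sup B \is a fin_num -> 0 < t -> t < 1 ->
  (forall a b, A a -> B b -> (t%:E * a + (1 - t)%:E * b <= M)%E) ->
  (t%:E * ereal_sup A + (1 - t)%:E * ereal_sup B <= M)%E.
Proof.
move=> hA hB t0 t1 H.
rewrite -(fineK hA) -(fineK hB); set sa := fine _; set sb := fine _.
rewrite -!EFinM -EFinD; apply/lee_addgt0Pr => e e0.
have : ((sa - e)%:E < ereal_sup A)%E by rewrite -(fineK hA) lte_fin -/sa; lra.
case/ereal_sup_gt => a Aa /ltW ha.
have : ((sb - e)%:E < ereal_sup B)%E by rewrite -(fineK hB) lte_fin -/sb; lra.
case/ereal_sup_gt => b Bb /ltW hb.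
apply: (@le_trans _ _ (t%:E * a + (1 - t)%:E * b + e%:E)%E); last first.
  by apply: leeD => //; exact: H.
have -> : t * sa + (1 - t) * sb = (t * (sa - e) + (1 - t) * (sb - e)) + e by ring.
rewrite EFinD; apply: leeD => //.

rewrite EFinD !EFinM; apply: leeD; apply: lee_wpmul2l => //; rewrite lee_fin; lra.
Qed.

Lemma comb_le f1 f2 x1 x2 t : budget_set P Z x1 f1 -> budget_set P Z x2 f2 ->
  0 < t -> t < 1 ->
  (t%:E * expect_utility P (Uc U) f1 + (1 - t)%:E * expect_utility P (Uc U) f2
     <= wc (t * x1 + (1 - t) * x2))%E.
Proof.
move=> hf1 hf2 t0 t1.
have t1' : 0 < 1 - t by rewrite subr_gt0.
rewrite /expect_utility; case: ifPn => h1; last by rewrite tNy // leNye.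
case: ifPn => h2; last by rewrite tNy' // leNye.
have i1 := EUint (Uc_meas hU) UcW hf1 h1.
have i2 := EUint (Uc_meas hU) UcW hf2 h2.
case: (hf1) => mf1 [f10 fx1]; case: (hf2) => mf2 [f20 fx2].
pose fm w := t * f1 w + (1 - t) * f2 w.
have hfm : budget_set P Z (t * x1 + (1 - t) * x2) fm.
  split; first by apply: measurable_funD; apply: measurable_funM.
  split; first by move=> w; rewrite /fm addr_ge0 // mulr_ge0 // ltW.
  have -> : (\int[P]_w (Z w * fm w)%:E =
      \int[P]_w (t%:E * (Z w * f1 w)%:E + (1 - t)%:E * (Z w * f2 w)%:E))%E.
    apply: eq_integral => w _; rewrite -!EFinM -EFinD /fm; congr (_%:E); ring.
  rewrite integralD //; [|apply: integrableZl => //; exact: Zfi hf1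
                         |apply: integrableZl => //; exact: Zfi hf2].
  rewrite !integralZl //; [|exact: Zfi hf2|exact: Zfi hf1].
  apply: (@le_trans _ _ (t%:E * x1%:E + (1 - t)%:E * x2%:E)%E); last by rewrite -!EFinM -EFinD.
  by apply: leeD; apply: lee_wpmul2l => //; rewrite lee_fin ltW.
pose g w := (t%:E * Uc U (f1 w) + (1 - t)%:E * Uc U (f2 w))%E.
have ig : P.-integrable setT g.
  by apply: integrableD => //; apply: integrableZl.
have gle : forall w, (g w <= Uc U (fm w))%E.
  move=> w; case: (Uc_concave hU) => _ /(_ (f1 w) (f2 w) t I I (ltW t0) (ltW t1)).
  by [].
have := EUge (Uc_meas hU) UcW hfm ig gle.
rewrite /g integralD //; [|exact: integrableZl|exact: integrableZl].
rewrite !integralZl // => h; apply: le_trans h _.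
by apply: ereal_sup_ubound; exists fm.
Qed.


Lemma wc_fin x : 0 < x -> wc x \is a fin_num.
Proof.
move=> x0; have [r hr] := wU_lb x0.
have vfin := integrable_fin_num measurableT (VZi ltr01).
rewrite fin_numElt; apply/andP; split.
  by apply: lt_le_trans (le_trans hr (wU_le_wc x)); rewrite ltNyr.
apply: le_lt_trans (wc_ub x ltr01) _.
by rewrite -(fineK vfin) -EFinD ltry.
Qed.

Lemma Dpos (x : R) : `]0, +oo[%classic x -> 0 < x.
Proof. by rewrite /= in_itv /= andbT. Qed.

Lemma wc_concave : concave_on `]0, +oo[%classic wc.
Proof.
split; first by move=> x /Dpos x0; have /fin_numP[] := wc_fin x0.
move=> x1 x2 t /Dpos x10 /Dpos x20 t0 t1.
have [->|tp] := eqVneq t 0.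
  by rewrite mul0e add0e subr0 mul1e mul0r add0r mul1r.
have [->|t1'] := eqVneq t 1.
  by rewrite subrr mul0e adde0 mul1e mul1r mul0r addr0.
have tp' : 0 < t by rewrite lt_neqAle eq_sym tp t0.
have tq : t < 1 by rewrite lt_neqAle t1' t1.
apply: (sup2 (wc_fin x10) (wc_fin x20) tp' tq) => _ _ [f1 hf1 <-] [f2 hf2 <-].
exact: (comb_le hf1 hf2 tp' tq).
Qed.


Lemma env_le (h : R -> \bar R) x : 0 < x ->
  concave_on `]0, +oo[%classic h -> (forall z, `]0, +oo[%classic z -> (wU z <= h z)%E) ->
  (wc x <= h x)%E.
Proof.
move=> x0 [hnoo hcc] hdom.
have Dz : forall z : R, 0 < z -> `]0, +oo[%classic z by move=> z z0; rewrite /= in_itv /= andbT.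
have hfin : forall z, 0 < z -> h z \is a fin_num.
  move=> z z0; have [r hr] := wU_lb z0.
  rewrite fin_numElt; apply/andP; split.
    by apply: lt_le_trans (le_trans hr (hdom z (Dz z z0))); rewrite ltNyr.
  by rewrite ltey; apply: hnoo; exact: Dz.
pose hr z := fine (h z).
have hE : forall z, 0 < z -> h z = (hr z)%:E by move=> z z0; rewrite /hr fineK // hfin.
have wUh : forall z, 0 < z -> (wU z <= (hr z)%:E)%E.
  by move=> z z0; rewrite -hE //; apply: hdom; exact: Dz.
have chord : forall a b c, 0 < a -> a < b -> b < c ->
    (hr c - hr b) / (c - b) <= (hr b - hr a) / (b - a).
  move=> a b c a0 ab bc.
  have ca : 0 < c - a by lra.
  pose t := (c - b) / (c - a).
  have t0 : 0 <= t by apply: divr_ge0; lra.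
  have t1 : t <= 1 by rewrite ler_pdivrMr // mul1r; lra.
  have mid : t * a + (1 - t) * c = b by rewrite /t; field; rewrite gt_eqF.
  have := hcc a c t (Dz a a0) (Dz c (lt_trans a0 (lt_trans ab bc))) t0 t1.
  rewrite mid (hE a) // (hE c) ?(lt_trans a0 (lt_trans ab bc)) // (hE b) ?(lt_trans a0 ab) //.
  rewrite -!EFinM -EFinD lee_fin => H.
  have H2 : (c - b) * hr a + (b - a) * hr c <= (c - a) * hr b.
    have e1 : (c - a) * (t * hr a + (1 - t) * hr c) = (c - b) * hr a + (b - a) * hr c.
      by rewrite /t; field; rewrite gt_eqF.
    by rewrite -e1 ler_pM2l.
  rewrite ler_pdivrMr ?subr_gt0 // mulrAC ler_pdivlMr ?subr_gt0 //.
  rewrite -subr_ge0.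
  have -> : (hr b - hr a) * (c - b) - (hr c - hr b) * (b - a) =
            (c - a) * hr b - ((c - b) * hr a + (b - a) * hr c) by ring.
  by rewrite subr_ge0.
pose E := [set (hr z - hr x) / (z - x) | z in [set z | x < z]].
have Eub : has_ubound E.
  exists ((hr x - hr (x / 2)) / (x - x / 2)) => _ [z /= xz <-].
  apply: chord => //; first by rewrite divr_gt0.
  by rewrite ltr_pdivrMr //; lra.
have E0 : E !=set0 by exists ((hr (x + 1) - hr x) / (x + 1 - x)); exists (x + 1) => //=; lra.
pose s := sup E.
have sright : forall z, x < z -> hr z <= hr x + s * (z - x).
  move=> z xz; have : (hr z - hr x) / (z - x) <= s.
    by apply: ub_le_sup => //; exists z.
  by rewrite ler_pdivrMr ?subr_gt0 //; lra.
have sleft : forall z, 0 < z -> z < x -> s * (x - z) <= hr x - hr z.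
  move=> z z0 zx; have : s <= (hr x - hr z) / (x - z).
    apply: ge_sup => // _ [w /= xw <-]; exact: chord.
  by rewrite ler_pdivlMr ?subr_gt0 // mulrC.
pose sp := Num.max s 0.
have sp0 : 0 <= sp by rewrite le_max lexx orbT.
have bound : forall z, 0 < z -> (wU z <= (hr x + sp * (z - x))%:E)%E.
  move=> z z0; have [xz|] := ltP x z.
    apply: le_trans (wUh z z0) _; rewrite lee_fin.
    have := sright z xz; have : s * (z - x) <= sp * (z - x).
      by rewrite ler_pM2r ?subr_gt0 // le_max lexx.
    lra.
  rewrite le_eqVlt => /orP[/eqP zx|zx].
    by rewrite zx subrr mulr0 addr0; exact: wUh.
  have [s0|s0] := leP s 0.
    have -> : sp = 0 by apply/max_idPr.
    rewrite mul0r addr0; apply: le_trans (wUh x x0).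
    by apply: wU_mono; exact: ltW.
  have -> : sp = s by apply/max_idPl; exact: ltW.
  apply: le_trans (wUh z z0) _; rewrite lee_fin.
  have := sleft z z0 zx.
  have -> : s * (z - x) = - (s * (x - z)) by ring.
  lra.
rewrite (hE x x0); apply/lee_addgt0Pr => e e0.
pose y := sp + e / x.
have ex : 0 < e / x by rewrite divr_gt0.
have y0 : 0 < y by rewrite /y; lra.
apply: le_trans (wc_ub x y0) _.
rewrite (part1 hU mZ Zpos iZ hV y0).
apply: (@le_trans _ _ ((hr x - sp * x)%:E + (x * y)%:E)%E).
  apply: leeD => //; apply: ge_ereal_sup => _ [z /Dpos z0 <-].
  rewrite leeBlDr //; apply: le_trans (bound z z0) _.
  rewrite -EFinD lee_fin.
  have : 0 <= z * (e / x) by rewrite mulr_ge0 // ltW.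
  have -> : z * y = sp * z + z * (e / x) by rewrite /y; ring.
  rewrite mulrBr; lra.
rewrite -EFinD lee_fin.
have -> : x * y = sp * x + e by rewrite /y; field; rewrite gt_eqF.
lra.
Qed.


Lemma part2 x : 0 < x ->
  wc x = concave_envelope_on `]0, +oo[%classic wU x.
Proof.
move=> x0; apply/eqP; rewrite eq_le; apply/andP; split.
  by apply: le_ereal_inf_tmp => _ [h [hc hd] <-]; exact: env_le.
apply: ereal_inf_lbound; exists wc => //; split; first exact: wc_concave.
by move=> z _; exact: wU_le_wc.
Qed.

End Part2.

Unset Implicit Arguments.

Theorem theorem4p1 (R : realType) (d : measure_display) (Omega : measurableType d)
  (P : probability Omega R) (T : R) (F : R -> set (set Omega))
  (lam : R) (S Z0 Z1 : R -> Omega -> R) (U : R -> R) :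
  0 < T ->
  filtration T F -> usual_conditions P T F ->
  0 < lam -> lam < 1 ->
  (forall t w, 0 <= t -> t <= T -> 0 < S t w) -> cadlag T S -> adapted T F S ->
  consistent_price_system P T F lam S Z0 Z1 ->
  is_utility U ->
  (forall y, 0 < y -> (\int[P]_w conj_V U (y * Z0 T w)%R < +oo)%E) ->
  (forall y, 0 < y ->
     (\int[P]_w conj_V U (y * Z0 T w)%R =
      ereal_sup [set (value_fun P (Z0 T) (Uext U) x - (x * y)%R%:E)%E
                | x in `]0%R, +oo[%classic])%E) /\
  (forall x, 0 < x ->
     value_fun P (Z0 T) (Uc U) x =
     concave_envelope_on `]0, +oo[%classic (value_fun P (Z0 T) (Uext U)) x).
Proof.
move=> T0 hF _ _ _ _ _ _ [hpos [_ [[had [hint _]] _]]] hU hV.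
have Zpos : forall w, 0 < Z0 T w by move=> w; case: (hpos T w (ltW T0) (lexx T)).
have iZ : P.-integrable setT (EFin \o Z0 T) by exact: hint (ltW T0) (lexx T).
have mZ : measurable_fun setT (Z0 T).
  move=> _ B mB; rewrite setTI; apply: (proj2 (proj1 hF T)).
  exact: had (ltW T0) (lexx T) B mB.
split; first by move=> y y0; exact: part1.
by move=> x x0; exact: part2.
Qed.
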